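(* Let $A$ be a finite skew brace and $k$ a field of prime characteristic $p$. Then $|A|$ is a power of $p$ if and only if, up to equivalence, the only irreducible representation of $A$ over $k$ is the trivial one $(k,\beta_0,\rho_0)$, where $\beta_0$ and $\rho_0$ send every element to the identity.
   Context: A skew brace is a set $A$ with two group operations $\cdot$ and $\circ$ such that $a\circ(b\cdot c)=(a\circ b)\cdot a^{-1}\cdot(a\circ c)$ for all $a,b,c\in A$; here $a^{-1}$ is the inverse in $(A,\cdot)$. For $a\in A$ let $\lambda^{\mathrm{op}}_a(b)=(a\circ b)\cdot a^{-1}$. A representation of $A$ over $k$ is a triple $(V,\beta,\rho)$ with $V$ a $k$-vector space, $\beta:(A,\cdot)\to\mathrm{GL}(V)$, $\rho:(A,\circ)\to\mathrm{GL}(V)$ group homomorphisms such that $\beta(\lambda^{\mathrm{op}}_a(b))=\rho(a)\beta(b)\rho(a)^{-1}$ for all $a,b\in A$. It is irreducible if $V\ne0$ and the only subspaces invariant under all $\beta(a)$ and $\rho(b)$ are $0$ and $V$. Two representations $(V_1,\beta_1,\rho_1),(V_2,\beta_2,\rho_2)$ are equivalent if there is a linear isomorphism $T:V_1\to V_2$ with $T\beta_1(a)=\beta_2(a)T$ and $T\rho_1(a)=\rho_2(a)T$ for all $a\in A$. *)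

(* Defs.v *)
From HB Require Import structures.
From mathcomp Require Import all_boot all_order all_algebra.
Set Implicit Arguments. Unset Strict Implicit. Unset Printing Implicit Defensive.
Import GRing.Theory.
Local Open Scope ring_scope.

Definition is_group (T : Type) (op : T -> T -> T) (e : T) (inv : T -> T) : Prop :=
  [/\ forall x y z, op x (op y z) = op (op x y) z,
      forall x, op e x = x, forall x, op x e = x,
      forall x, op (inv x) x = e & forall x, op x (inv x) = e].

Definition is_skew_brace (A : Type)
    (dot : A -> A -> A) (d1 : A) (dinv : A -> A)
    (circ : A -> A -> A) (c1 : A) (cinv : A -> A) : Prop :=
  [/\ is_group dot d1 dinv, is_group circ c1 cinv &
      forall a b c, circ a (dot b c) = dot (dot (circ a b) (dinv a)) (circ a c)].

Definition lambda_op (A : Type) (dot : A -> A -> A) (dinv : A -> A)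
  (circ : A -> A -> A) (a b : A) : A := dot (circ a b) (dinv a).

Definition is_GL (k : fieldType) (V : lmodType k) (f : V -> V) : Prop :=
  (forall (c : k) (u v : V), f (c *: u + v) = c *: f u + f v) /\ bijective f.

(* (V, beta, rho) is a representation of the skew brace A over k:
   beta : (A,.) -> GL(V) and rho : (A,o) -> GL(V) group homomorphisms with
   beta(lambda^op_a(b)) = rho(a) beta(b) rho(a)^{-1}
   (stated equivalently as beta(lambda^op_a(b)) rho(a) = rho(a) beta(b)). *)
Definition is_rep (A : Type) (dot : A -> A -> A) (dinv : A -> A)
    (circ : A -> A -> A) (k : fieldType) (V : lmodType k)
    (beta rho : A -> V -> V) : Prop :=
  [/\ forall a, is_GL (beta a), forall a, is_GL (rho a),
      forall a b v, beta (dot a b) v = beta a (beta b v),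
      forall a b v, rho (circ a b) v = rho a (rho b v) &
      forall a b v, beta (lambda_op dot dinv circ a b) (rho a v) = rho a (beta b v)].

Definition is_subspace (k : fieldType) (V : lmodType k) (S : V -> Prop) : Prop :=
  S 0 /\ forall (c : k) (u v : V), S u -> S v -> S (c *: u + v).

Definition is_irreducible_rep (A : Type) (dot : A -> A -> A) (dinv : A -> A)
    (circ : A -> A -> A) (k : fieldType) (V : lmodType k)
    (beta rho : A -> V -> V) : Prop :=
  [/\ is_rep dot dinv circ beta rho,
      exists v : V, v <> 0 &
      forall S : V -> Prop, is_subspace S ->
        (forall a v, S v -> S (beta a v)) -> (forall a v, S v -> S (rho a v)) ->
        (forall v, S v -> v = 0) \/ (forall v, S v)].

Definition rep_equiv (A : Type) (k : fieldType) (V1 V2 : lmodType k)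
    (beta1 rho1 : A -> V1 -> V1) (beta2 rho2 : A -> V2 -> V2) : Prop :=
  exists T : V1 -> V2,
    [/\ forall (c : k) (u v : V1), T (c *: u + v) = c *: T u + T v,
        bijective T,
        forall a v, T (beta1 a v) = beta2 a (T v) &
        forall a v, T (rho1 a v) = rho2 a (T v)].

Definition triv_map (A : Type) (k : fieldType) : A -> k^o -> k^o := fun _ v => v.

(* Main.v *)
Require Import Defs.
From HB Require Import structures.
From mathcomp Require Import all_boot all_order all_algebra all_fingroup all_solvable.
From Stdlib Require Import Classical.
Set Implicit Arguments. Unset Strict Implicit. Unset Printing Implicit Defensive.
Import GRing.Theory.
Local Open Scope ring_scope.

Record grp (A : finType) := Grp {
  gmul : A -> A -> A; gone : A; ginv : A -> A;
  gmulA : associative gmul; gmul1 : left_id gone gmul;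
  gmulV : left_inverse gone ginv gmul }.

Definition gty (A : finType) (g : grp A) : Type := A.
HB.instance Definition _ (A : finType) (g : grp A) := Finite.on (gty g).
HB.instance Definition _ (A : finType) (g : grp A) :=
  Finite_isGroup.Build (gty g) (@gmulA A g) (@gmul1 A g) (@gmulV A g).

Lemma gtyM (A : finType) (g : grp A) (x y : gty g) : (x * y)%g = gmul g x y.
Proof. by []. Qed.
Lemma gty1 (A : finType) (g : grp A) : (1 : gty g)%g = gone g.
Proof. by []. Qed.
Lemma gtyV (A : finType) (g : grp A) (x : gty g) : (x^-1)%g = ginv g x.
Proof. by []. Qed.

Definition grp_of (A : finType) op e inv (h : @is_group A op e inv) : grp A :=
  @Grp A op e inv (match h with And5 a _ _ _ _ => a end)
    (match h with And5 _ b _ _ _ => b end) (match h with And5 _ _ _ d _ => d end).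
Lemma gty_card (A : finType) (g : grp A) : #|[set: gty g]| = #|A|.
Proof. rewrite cardsT. apply: (@bij_eq_card _ _ (fun x : gty g => (x : A))). by exists (fun x : A => (x : gty g)). Qed.
Local Open Scope ring_scope.

Section FixPt.
Variables (gT : finGroupType) (p : nat) (k : fieldType) (V : lmodType k).
Hypothesis hp : p \in [pchar k].
Variable f : gT -> V -> V.
Hypothesis flin : forall g c u v, f g (c *: u + v) = c *: f g u + f g v.
Hypothesis f1 : forall x, f 1%g x = x.
Hypothesis fM : forall g h x, f (g * h)%g x = f g (f h x).
Hypothesis pG : (p.-group [set: gT])%g.
Variable W : V -> Prop.
Hypothesis hW : is_subspace W.
Hypothesis WG : forall g x, W x -> W (f g x).
Variable v : V.
Hypothesis Wv : W v.
Hypothesis vn0 : v != 0.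

Let prp : prime p := pcharf_prime hp.
Let p_gt0 : (0 < p)%N := prime_gt0 prp.

Lemma f0 g : f g 0 = 0.
Proof.
have h := flin g 1 0 0; rewrite !scale1r addr0 in h.
by apply: (addrI (f g 0)); rewrite addr0 -h.
Qed.
Lemma fD g x y : f g (x + y) = f g x + f g y.
Proof. by rewrite -{1}[x]scale1r flin scale1r. Qed.
Lemma fZ g c x : f g (c *: x) = c *: f g x.
Proof. by rewrite -[c *: x]addr0 flin f0 addr0. Qed.
Lemma fsum g (I : finType) (F : I -> V) : f g (\sum_i F i) = \sum_i f g (F i).
Proof. exact: (big_morph (f g) (fD g) (f0 g)). Qed.

Lemma W0 : W 0. Proof. by case: hW. Qed.
Lemma WD x y : W x -> W y -> W (x + y).
Proof. by case: hW => _ h Wx Wy; rewrite -[x]scale1r; apply: h. Qed.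
Lemma WZ c x : W x -> W (c *: x).
Proof. by case: hW => h0 h Wx; rewrite -[c *: x]addr0; apply: h. Qed.
Lemma Wsum (I : finType) (F : I -> V) : (forall i, W (F i)) -> W (\sum_i F i).
Proof. by move=> h; apply: (big_ind W W0 WD). Qed.

Definition pic (c : {ffun gT -> 'I_p}) : V := \sum_h (c h : nat)%:R *: f h v.
Definition sp := codom pic.
Definition rT := seq_sub sp.

Lemma sp_W x : x \in sp -> W x.
Proof. by case/codomP=> c ->; apply: Wsum => h; apply/WZ/WG. Qed.

Lemma sp_f g x : x \in sp -> f g x \in sp.
Proof.
case/codomP=> c ->; apply/codomP; exists [ffun h => c (g^-1 * h)%g].
rewrite /pic fsum [RHS](reindex_inj (mulgI g)) /=; apply: eq_bigr => h _.
by rewrite ffunE mulKg fZ fM.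
Qed.

Lemma natr_modp n : ((n %% p)%N%:R : k) = n%:R.
Proof. exact: GRing.natr_mod_pchar hp n. Qed.

Lemma sp_v x : x \in sp -> x + v \in sp.
Proof.
case/codomP=> c ->; apply/codomP.
exists [ffun h => Ordinal (ltn_pmod ((c h : nat) + (h == 1%g))%N p_gt0)].
rewrite /pic (bigD1 1%g) //= [in RHS](bigD1 1%g) //= ffunE /= eqxx natr_modp natrD scalerDl f1.
rewrite -!addrA; congr (_ + _); rewrite addrC; congr (_ + _); first by rewrite scale1r.
apply: eq_bigr => h /negbTE h1; rewrite ffunE /= h1 addn0 natr_modp //.
Qed.

Lemma sp_vn x n : x \in sp -> x + n%:R *: v \in sp.
Proof.
move=> xs; elim: n => [|n IH]; first by rewrite scale0r addr0.
by rewrite -addn1 natrD scalerDl scale1r addrA; apply: sp_v.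
Qed.

Lemma sp0 : 0 \in sp.
Proof.
apply/codomP; exists [ffun _ => Ordinal p_gt0].
by rewrite /pic big1 // => h _; rewrite ffunE scale0r.
Qed.

Definition act1 (x : rT) (g : gT) : rT := insubd x (f g^-1 (val x)).
Lemma act1_val x g : val (act1 x g) = f g^-1 (val x).
Proof. by rewrite /act1 val_insubd sp_f // (valP x). Qed.
Lemma act1_1 : act1^~ 1%g =1 id.
Proof. by move=> x; apply: val_inj; rewrite act1_val invg1 f1. Qed.
Lemma act1_M x : act_morph act1 x.
Proof. by move=> a b; apply: val_inj; rewrite !act1_val invMg fM. Qed.
Definition to1 := TotalAction act1_1 act1_M.


Let pgt1 : (1 < p)%N := prime_gt1 prp.

Definition act2 (x : rT) (j : 'Z_p) : rT := insubd x (val x + (j : nat)%:R *: v).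
Lemma act2_val x j : val (act2 x j) = val x + (j : nat)%:R *: v.
Proof. by rewrite /act2 val_insubd sp_vn // (valP x). Qed.
Lemma act2_1 : act2^~ 1%g =1 id.
Proof. by move=> x; apply: val_inj; rewrite act2_val scale0r addr0. Qed.
Lemma act2_M x : act_morph act2 x.
Proof.
move=> a b; apply: val_inj; rewrite !act2_val -addrA -scalerDl -natrD.
congr (_ + _ *: _).
have -> : (((a * b)%g : 'Z_p) : nat) = ((a + b) %% (Zp_trunc p).+2)%N by [].
have e : forall m : nat, ((m %% (Zp_trunc p).+2)%N%:R : k) = m%:R.
  by move=> m; rewrite Zp_cast // natr_modp.
by rewrite e.
Qed.
Definition to2 := TotalAction act2_1 act2_M.

Lemma fix_exists : exists w, [/\ W w, w != 0 & forall g, f g w = w].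
Proof.
have A1 : [acts [set: gT], on [set: rT] | to1] by apply/actsP => a _ x; rewrite !inE.
have M1 := pgroup_fix_mod pG A1.
have pZ : (p.-group [set: 'Z_p])%g.
  by rewrite /pgroup cardsT card_ord Zp_cast // pnat_id.
have A2 : [acts [set: 'Z_p], on [set: rT] | to2] by apply/actsP => a _ x; rewrite !inE.
have M2 := pgroup_fix_mod pZ A2.
have F2 : ('Fix_([set: rT] | to2)([set: 'Z_p]))%g = set0.
  apply/setP => x; rewrite in_set0; apply/negP; rewrite inE => /andP [_ /afixP h].
  have := h (inZp 1) (in_setT _) => /(congr1 val) /=.
  rewrite act2_val /= modn_small; last by [].
  rewrite scale1r => /eqP; rewrite -subr_eq0 addrAC subrr add0r => /eqP v0.
  by move: vn0; rewrite v0 eqxx.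
rewrite F2 cards0 mod0n in M2.
set F1 := ('Fix_([set: rT] | to1)([set: gT]))%g in M1.
pose x0 : rT := SeqSub sp0.
have x0F : x0 \in F1.
  rewrite inE in_setT /=; apply/afixP => a _; apply: val_inj.
  by rewrite act1_val /= f0.
have : ~~ (F1 \subset [set x0]).
  apply/negP => /subset_leq_card; rewrite cards1 => le1.
  have c1 : #|F1| = 1%N.
    by apply/eqP; rewrite eqn_leq le1 card_gt0; apply/set0Pn; exists x0.
  by move: M1; rewrite M2 c1 modn_small.
case/subsetPn => x xF; rewrite inE => xx0.
exists (val x); split.
- exact: sp_W (valP x).
- apply/negP => /eqP x0'; move/eqP: xx0; apply; apply: val_inj; exact: x0'.
- move=> g; move: xF; rewrite inE => /andP [_ /afixP h].
  have := h g^-1%g (in_setT _) => /(congr1 val).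
  by rewrite act1_val invgK.
Qed.

End FixPt.
Lemma triv_irr (A : finType) dot dinv circ (k : fieldType) :
  is_irreducible_rep dot dinv circ (@triv_map A k) (@triv_map A k).
Proof.
have GLid : is_GL (fun v : k^o => v) by split=> //; exists id.
split.
- by split.
- by exists (1 : k^o) => /eqP; rewrite oner_eq0.
- move=> S [S0 Sl] _ _.
  case: (classic (exists x : k^o, S x /\ x <> 0)) => [[x [Sx x0]]|h]; [right|left].
    move=> y; have -> : y = (y / x) *: x + 0.
      by rewrite addr0 /GRing.scale /= mulfVK //; apply/eqP.
    by apply: Sl.
  by move=> y Sy; apply: NNPP => y0; apply: h; exists y.
Qed.

Lemma lin0 (k : fieldType) (V : lmodType k) (f : V -> V) :
  (forall c u v, f (c *: u + v) = c *: f u + f v) -> f 0 = 0.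
Proof.
move=> flin; have h := flin 1 0 0; rewrite !scale1r addr0 in h.
by apply: (addrI (f 0)); rewrite addr0 -h.
Qed.

Lemma scale_uniq (k : fieldType) (V : lmodType k) (w : V) (c d : k) :
  w != 0 -> c *: w = d *: w -> c = d.
Proof.
move=> wn0 /eqP; rewrite -subr_eq0 -scalerBl scaler_eq0 (negbTE wn0) orbF subr_eq0.
by move/eqP.
Qed.

Lemma GL_id1 (A : Type) (op : A -> A -> A) (e : A) (k : fieldType) (V : lmodType k)
  (f : A -> V -> V) : op e e = e -> is_GL (f e) ->
  (forall a b v, f (op a b) v = f a (f b v)) -> forall x, f e x = x.
Proof.
move=> ee [_ [g gK _]] fM x.
by have := gK (f e x); rewrite -fM ee gK => h; symmetry.
Qed.

Lemma forward (A : finType) dot d1 dinv circ c1 cinv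
  (hA : is_skew_brace dot d1 dinv circ c1 cinv) (k : fieldType) (p : nat)
  (hp : p \in [pchar k]) (n : nat) (hn : #|A| = (p ^ n)%N)
  (V : lmodType k) (beta rho : A -> V -> V)
  (hV : is_irreducible_rep dot dinv circ beta rho) :
  rep_equiv beta rho (@triv_map A k) (@triv_map A k).
Proof.
case: hA => hD hC hbr.
case: hV => [[bGL rGL bM rM lam] [v0 v0n] irr].
have bL a : forall c u v, beta a (c *: u + v) = c *: beta a u + beta a v := (bGL a).1.
have rL a : forall c u v, rho a (c *: u + v) = c *: rho a u + rho a v := (rGL a).1.
have [dA d1l d1r dVl dVr] := hD.
have [cA c1l c1r cVl cVr] := hC.
have b1 : forall x, beta d1 x = x by apply: GL_id1 (d1l d1) (bGL d1) bM.
have r1 : forall x, rho c1 x = x by apply: GL_id1 (c1l c1) (rGL c1) rM.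
have prp := pcharf_prime hp.
have pD : (p.-group [set: gty (grp_of hD)])%g.
  by rewrite /pgroup gty_card hn pnatX pnat_id.
have pC : (p.-group [set: gty (grp_of hC)])%g.
  by rewrite /pgroup gty_card hn pnatX pnat_id.
have v0n' : v0 != 0 by apply/eqP.
have hT : is_subspace (fun _ : V => True) by [].
have [w0 [_ w0n w0fix]] := @fix_exists (gty (grp_of hD)) p k V hp beta bL b1 bM pD
  (fun _ => True) hT (fun _ _ _ => I) v0 I v0n'.
pose W2 := fun x => forall b, beta b x = x.
have hW2 : is_subspace W2.
  split=> [b|c u v hu hv b]; first exact: lin0.
  by rewrite bL hu hv.
have WG2 : forall (g : gty (grp_of hC)) x, W2 x -> W2 (rho g x).
  move=> g x hx b.
  pose b' := circ (cinv g) (dot b g).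
  have lb : lambda_op dot dinv circ g b' = b.
    by rewrite /lambda_op /b' cA cVr c1l -dA dVr d1r.
  by rewrite -{1}lb lam hx.
have [w [w2 wn wfix]] := @fix_exists (gty (grp_of hC)) p k V hp rho rL r1 rM pC
  W2 hW2 WG2 w0 w0fix w0n.
pose F := fun x => (forall b, beta b x = x) /\ (forall a, rho a x = x).
have hF : is_subspace F.
  split; first by split=> [b|a]; apply: lin0.
  by move=> c u v [hu1 hu2] [hv1 hv2]; split=> [b|a]; rewrite ?bL ?rL ?hu1 ?hv1 ?hu2 ?hv2.
have [F0|Fall] := irr F hF (fun a x hx => ltac:(by rewrite (hx.1 a)))
  (fun a x hx => ltac:(by rewrite (hx.2 a))).
  by move: wn; rewrite (F0 w (conj w2 wfix)) eqxx.
pose L := fun x => exists c : k, x = c *: w.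
have hL : is_subspace L.
  split; first by exists 0; rewrite scale0r.
  move=> c u v [a ->] [b ->]; exists (c * a + b).
  by rewrite scalerA scalerDl.
have [L0|Lall] := irr L hL (fun a x hx => ltac:(by rewrite ((Fall x).1 a)))
  (fun a x hx => ltac:(by rewrite ((Fall x).2 a))).
  by move: wn; rewrite (L0 w (ex_intro _ 1 (esym (scale1r w)))) eqxx.
have hL' : forall x, exists c : k, x == c *: w.
  by move=> x; have [c ->] := Lall x; exists c.
pose T := fun x => xchoose (hL' x).
have TK x : T x *: w = x by apply/esym/eqP; exact: (xchooseP (hL' x)).
exists (T : V -> k^o); split.
- move=> c u v; apply: (scale_uniq wn).
  have -> : ((c *: (T u : k^o) + T v : k^o) : k) = c * T u + T v by []. 
  by rewrite TK scalerDl -scalerA !TK.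
- exists (fun c : k^o => c *: w) => [x|c]; first exact: TK.
  by apply: (scale_uniq wn); rewrite TK.
- by move=> a x; rewrite ((Fall x).1 a).
- by move=> a x; rewrite ((Fall x).2 a).
Qed.
Section Back.
Variables (gT : finGroupType) (k : fieldType) (p : nat).
Hypothesis hp : p \in [pchar k].
Variable P : {group gT}.
Hypothesis sylP : (p.-Sylow([set: gT]) P)%g.

Definition vT := {ffun {set gT} -> k^o}.
Definition rhoF (a : gT) (f : vT) : vT := [ffun Y => f (Y :* a)%g].
Definition X := rcosets P [set: gT].
Definition V0 (f : vT) := (forall Y, Y \notin X -> f Y = 0) /\ \sum_(Y in X) f Y = 0.

Lemma rhoF_lin a c (f g : vT) : rhoF a (c *: f + g) = c *: rhoF a f + rhoF a g.
Proof. by apply/ffunP => Y; rewrite !ffunE. Qed.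
Lemma rhoFM a b f : rhoF (a * b)%g f = rhoF a (rhoF b f).
Proof. by apply/ffunP => Y; rewrite !ffunE rcosetM. Qed.
Lemma rhoF1 f : rhoF 1%g f = f.
Proof. by apply/ffunP => Y; rewrite !ffunE rcoset1. Qed.

Lemma X_rcoset Y a : ((Y :* a)%g \in X) = (Y \in X).
Proof.
apply/rcosetsP/rcosetsP => [[x _ e]|[x _ ->]].
  exists (x * a^-1)%g; first exact: in_setT.
  by rewrite rcosetM -e -rcosetM mulgV rcoset1.
by exists (x * a)%g; rewrite ?in_setT // rcosetM.
Qed.

Lemma V0_sub : is_subspace V0.
Proof.
split.
  by split=> [Y _|]; rewrite ?ffunE // big1 // => Y _; rewrite ffunE.
move=> c u v [u1 u2] [v1 v2]; split=> [Y hY|].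
  by rewrite !ffunE u1 // v1 // scaler0 addr0.
rewrite (eq_bigr (fun Y => c * u Y + v Y)); last by move=> Y _; rewrite !ffunE.
by rewrite big_split /= -mulr_sumr u2 v2 mulr0 addr0.
Qed.

Lemma V0_rho a f : V0 f -> V0 (rhoF a f).
Proof.
move=> [f1 f2]; split=> [Y hY|].
  by rewrite ffunE f1 // X_rcoset.
rewrite -[RHS]f2 [RHS](reindex_inj (can_inj (fun Y => rcosetK a Y))) /=.
apply: eq_big => [Y|Y _]; first by rewrite X_rcoset.
by rewrite ffunE.
Qed.

Lemma span_closed (Q : vT -> Prop) (s : seq vT) x : is_subspace Q ->
  (forall y, y \in s -> Q y) -> x \in <<s>>%VS -> Q x.
Proof.
move=> [Q0 Ql] hs xs; rewrite (@coord_span _ _ _ (in_tuple s) x xs).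
have QD u v : Q u -> Q v -> Q (u + v) by move=> *; rewrite -[u]scale1r; apply: Ql.
apply: (big_ind Q Q0 QD) => i _.
rewrite -[_ *: _]addr0; apply: Ql => //; apply: hs; exact: mem_nth.
Qed.

Definition Ospan (f : vT) := <<codom (fun a => rhoF a f)>>%VS.

Definition good (U : {vspace vT}) :=
  [/\ U != 0%VS, forall a x, x \in U -> rhoF a x \in U & forall x, x \in U -> V0 x].

Lemma vsub (U : {vspace vT}) : is_subspace (fun x => x \in U).
Proof. by split=> [|c u v hu hv]; rewrite ?mem0v // memvD // memvZ. Qed.

Lemma good_Ospan f : V0 f -> f != 0 -> good (Ospan f).
Proof.
move=> Vf fn0; split.
- apply/negP => /eqP e; move: fn0; rewrite -memv0 -e.
  by apply/negP/negPn; apply: memv_span; rewrite -{1}[f]rhoF1 codom_f.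
- move=> a x; apply: (@span_closed (fun x => rhoF a x \in Ospan f)).
    split=> [|c u v hu hv].
      by rewrite (_ : rhoF a 0 = 0) ?mem0v //; apply/ffunP => Y; rewrite !ffunE.
    by rewrite rhoF_lin memvD // memvZ.
  move=> y /codomP [b ->]; rewrite -rhoFM; apply: memv_span; exact: codom_f.
- move=> x; apply: (@span_closed V0); first exact: V0_sub.
  by move=> y /codomP [b ->]; apply: V0_rho.
Qed.

Lemma min_good n (U : {vspace vT}) : (\dim U <= n)%N -> good U ->
  exists U', good U' /\ forall W, good W -> (W <= U')%VS -> W = U'.
Proof.
elim: n U => [|n IH] U hd gU.
  by case: gU; rewrite -dimv_eq0 -leqn0 hd.
case: (classic (exists W, [/\ good W, (W <= U)%VS & W != U])) => [[W [gW WU WnU]]|h].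
  apply: (IH W) => //; rewrite -ltnS; apply: leq_trans hd.
  by rewrite ltn_neqAle (dimv_leqif_eq WU) WnU (dimv_leqif_eq WU).
exists U; split=> // W gW WU; apply: NNPP => WnU; apply: h; exists W; split=> //.
by apply/eqP.
Qed.

Lemma nontriv_irr : #|[set: gT] : P|%g != 1%N ->
  exists (V : lmodType k) (rho : gT -> V -> V),
  [/\ (forall a, is_GL (rho a)), (forall a b v, rho (a * b)%g v = rho a (rho b v)),
      (exists v : V, v <> 0),
      (forall S, is_subspace S -> (forall a v, S v -> S (rho a v)) ->
         (forall v, S v -> v = 0) \/ (forall v, S v)) &
      (forall u : V, (forall a, rho a u = u) -> u = 0)].
Proof.
move=> idx.
have PX : (P : {set gT}) \in X by apply/rcosetsP; exists 1%g; rewrite ?in_setT ?rcoset1.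
have : (1 < #|X|)%N.
  rewrite ltn_neqAle eq_sym card_gt0 idx /=; apply/set0Pn; by exists (P : {set gT}).
case/card_gt1P => Y1 [Y2 [hY1 hY2 Y12]].
pose d : vT := [ffun Y => (Y == Y1)%:R - (Y == Y2)%:R].
have Vd : V0 d.
  split=> [Y hY|].
    rewrite ffunE; case: eqP => [e|_]; first by move: hY; rewrite e hY1.
    by case: eqP => [e|_]; [move: hY; rewrite e hY2 | rewrite subrr].
  rewrite (eq_bigr (fun Y => (Y == Y1)%:R - (Y == Y2)%:R)); last by move=> Y _; rewrite ffunE.
  have s1 Z : Z \in X -> \sum_(Y in X) ((Y == Z)%:R : k) = 1.
    move=> hZ; rewrite (bigD1 Z) //= eqxx big1 ?addr0 //.
    by move=> Y /andP [_ /negbTE ->].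
  by rewrite sumrB !s1 // subrr.
have dn0 : d != 0.
  apply/negP => /eqP /ffunP /(_ Y1); rewrite !ffunE eqxx (negbTE Y12) subr0.
  by move/eqP; rewrite oner_eq0.
have [U [[Un0 Uinv UV0] Umin]] := min_good (leqnn _) (good_Ospan Vd dn0).
pose rho' (a : gT) (u : subvs_of U) : subvs_of U := vsproj U (rhoF a (vsval u)).
have inU a (u : subvs_of U) : rhoF a (vsval u) \in U := Uinv a _ (subvsP u).
have rv a u : vsval (rho' a u) = rhoF a (vsval u) := vsprojK (inU a u).
have vinj : injective (@vsval _ _ U) := can_inj (@vsvalK _ _ U).
exists (subvs_of U), rho'; split.
- move=> a; split.
    by move=> c u v; apply: vinj; rewrite rv !linearP /= rhoF_lin !rv.
  by exists (rho' a^-1%g) => u; apply: vinj; rewrite !rv -rhoFM ?mulVg ?mulgV rhoF1.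
- by move=> a b u; apply: vinj; rewrite !rv rhoFM.
- exists (vsproj U (vpick U)) => /(congr1 (@vsval _ _ U)).
  rewrite vsprojK ?memv_pick // linear0 => /eqP; rewrite vpick0.
  by apply/negP.
- move=> S [S0 Sl] Sinv.
  case: (classic (exists s0, S s0 /\ s0 <> 0)) => [[s0 [Ss0 s0n]]|h]; [right|left]; last first.
    by move=> y Sy; apply: NNPP => y0; apply: h; exists y.
  have vs0 : vsval s0 != 0.
    by apply/negP => /eqP e; apply: s0n; apply: vinj; rewrite e linear0.
  have gW := good_Ospan (UV0 _ (subvsP s0)) vs0.
  have WU : (Ospan (vsval s0) <= U)%VS.
    by apply/span_subvP => y /codomP [a ->]; apply: inU.
  have eW := Umin _ gW WU.
  move=> u; have : vsval u \in Ospan (vsval s0) by rewrite eW subvsP.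
  move/(@span_closed (fun x => S (vsproj U x))); rewrite vsvalK; apply.
    split=> [|c x y hx hy]; first by rewrite linear0.
    by rewrite linearP /=; apply: Sl.
  by move=> y /codomP [a ->]; apply: Sinv.
- move=> u ufix; apply: vinj; rewrite linear0.
  set x := vsval u.
  have xfix a : rhoF a x = x by rewrite /x -rv ufix.
  have [x1 x2] := UV0 _ (subvsP u).
  have xc Z : Z \in X -> x Z = x P.
    by case/rcosetsP => g _ ->; rewrite -{2}(xfix g) ffunE.
  have xP0 : x P = 0.
    move: x2; rewrite (eq_bigr (fun _ => x P)); last by move=> Z hZ; apply: xc.
    rewrite sumr_const -mulr_natr => /eqP; rewrite mulf_eq0 => /orP [/eqP //|].
    case/and3P: sylP => _ _; rewrite p'natE ?(pcharf_prime hp) //.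
    by rewrite (dvdn_pcharf hp) => /negbTE ->.
  apply/ffunP => Y; rewrite ffunE.
  by case: (boolP (Y \in X)) => hY; [rewrite xc | rewrite x1].
Qed.
End Back.

Lemma backward (A : finType) dot d1 dinv circ c1 cinv
  (hA : is_skew_brace dot d1 dinv circ c1 cinv) (k : fieldType) (p : nat)
  (hp : p \in [pchar k])
  (H : forall (V : lmodType k) (beta rho : A -> V -> V),
     is_irreducible_rep dot dinv circ beta rho ->
     rep_equiv beta rho (@triv_map A k) (@triv_map A k)) :
  exists n : nat, #|A| = (p ^ n)%N.
Proof.
case: hA => hD hC hbr.
pose GC := gty (grp_of hC).
have [P sylP] := Sylow_exists p [set: GC].
case: (eqVneq #|[set: GC] : P|%g 1%N) => [i1|i1].
  have := Lagrange (subsetT P); rewrite i1 muln1 => eC.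
  case/and3P: sylP => _ pP _.
  have [m hm] := p_natP pP.
  by exists m; rewrite -(gty_card (grp_of hC)) -eC hm.
have [V [rho [rGL rM [v0 v0n] irr fix0]]] := nontriv_irr hp sylP i1.
pose beta := fun (_ : A) (v : V) => v.
have Hir : is_irreducible_rep dot dinv circ beta rho.
  split.
  - split=> //; first by move=> a; split=> //; exists id.
  - by exists v0.
  - by move=> S hS _ hr; apply: irr.
have [T [_ [Tinv TK _] _ Trho]] := H V beta rho Hir.
apply: False_ind; apply: v0n; apply: fix0 => a.
by apply: (can_inj TK); rewrite Trho.
Qed.

Unset Implicit Arguments.

Theorem theorem3p6 (A : finType)
    (dot : A -> A -> A) (d1 : A) (dinv : A -> A)
    (circ : A -> A -> A) (c1 : A) (cinv : A -> A)
    (hA : is_skew_brace dot d1 dinv circ c1 cinv)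
    (k : fieldType) (p : nat) (hp : p \in [pchar k]) :
  (exists n : nat, #|A| = (p ^ n)%N) <->
  (is_irreducible_rep dot dinv circ (@triv_map A k) (@triv_map A k) /\
   forall (V : lmodType k) (beta rho : A -> V -> V),
     is_irreducible_rep dot dinv circ beta rho ->
     rep_equiv beta rho (@triv_map A k) (@triv_map A k)).
Proof.
split.
  move=> [n hn]; split; first exact: triv_irr.
  by move=> V beta rho hV; apply: (forward hA hp hn).
by move=> [_ H]; apply: (backward hA hp H).
Qed.
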